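(* Fix $\beta>0$, $k\in\mathbb{N}$ and $0<t_0<t<\infty$. Let $(C_n)_{n\ge1}$ be the solution on $[t_0,t]$ of $$C_1\equiv1,\qquad \dot C_n=\frac{k+1}{k}(n-1)B\,C_n+\frac{n\Gamma}{2}\sum_{j=1}^{n-1}C_jC_{n-j}\quad(2\le n\le k),$$ $$\dot C_n=nB\,C_n+\frac{n\Gamma}{2}\sum_{j=1}^{n-1}C_jC_{n-j}\quad(n>k),\qquad C_n(t_0)=0\ (n\ge2)$$ (these are the coefficient equations of $\Theta_t=\Gamma(z^2\Theta^2)_z+B((z\Theta)_z-L_k)$, $\Theta(t_0,\cdot)=1$, with Lagrange multiplier $L_k=1+\sum_{j=1}^{k-1}(1-j/k)C_{j+1}z^j$), and set $\Theta(t,z)=\sum_{n\ge1}C_n(t)z^{n-1}$. Let $$\tau_k(t_0,t)=\int_{t_0}^t\Gamma(s)\exp\!\Big(\frac{k+1}{k}\int_s^tB(s')\,ds'\Big)ds .$$ Then for every $z\ge0$ with $e\,z\,\tau_k(t_0,t)<1$ the series converges and $$\Theta(t,z)\le\frac{-1}{\tau_k(t_0,t)\,z}\,W\!\left(-\tau_k(t_0,t)\,z\right).$$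
   Context: $g(s)=-\frac{s}{4\pi}\int_s^\infty K_0'''(r)\frac{r}{\sqrt{r^2-s^2}}dr$ for $s>0$ (a positive function), $K_0$ the modified Bessel function of the second kind of order $0$. $\Gamma(t)=\frac{\beta\pi}{4}t^2g(t)$ and $B(t)=\frac{\beta}{2}g(t)$. $W$ is the principal branch of the Lambert $W$ function, with $-W(-x)/x=\sum_{n\ge1}\frac{n^{n-1}}{n!}x^{n-1}$ for $0\le x\le1/e$ (value $1$ at $x=0$). *)

(* Defs.v *)
From Stdlib Require Import Reals Lra.
Open Scope R_scope.

Definition RInt_is (f : R -> R) (a b v : R) : Prop :=
  exists pr : Riemann_integrable f a b, RiemannInt pr = v.

Definition improper_int_a_oo (f : R -> R) (a l : R) : Prop :=
  forall eps, 0 < eps -> exists M, forall b, M < b ->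
    exists pr : Riemann_integrable f a b, Rabs (RiemannInt pr - l) < eps.

Definition improper_int_oa_oo (f : R -> R) (a l : R) : Prop :=
  forall eps, 0 < eps -> exists delta, 0 < delta /\ exists M, forall u b,
    a < u < a + delta -> M < b ->
    exists pr : Riemann_integrable f u b, Rabs (RiemannInt pr - l) < eps.

(* K_0, modified Bessel function of the second kind of order 0, on r > 0,
   via its standard integral representation K_0(r) = int_0^oo e^{-r cosh u} du. *)
Definition is_BesselK0 (K0 : R -> R) : Prop :=
  forall r, 0 < r -> improper_int_a_oo (fun u => exp (- r * cosh u)) 0 (K0 r).

(* g(s) = -(s/(4 pi)) int_s^oo K_0'''(r) r / sqrt(r^2 - s^2) dr, s > 0,
   where K3 is the third derivative of K_0. *)
Definition is_g (K3 g : R -> R) : Prop :=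
  forall s, 0 < s -> exists I,
    improper_int_oa_oo (fun r => K3 r * r / sqrt (r ^ 2 - s ^ 2)) s I /\
    g s = - (s / (4 * PI)) * I.

(* Principal branch of Lambert W: w = W(x) iff w >= -1 and w e^w = x. *)
Definition is_LambertW0 (x w : R) : Prop := -1 <= w /\ w * exp w = x.

(* coefficient of B in the equation for C_n *)
Definition lin_coef (k n : nat) : R :=
  if (n <=? k)%nat then (INR k + 1) / INR k * (INR n - 1) else INR n.

(* Main.v *)
Require Import Defs.
From Stdlib Require Import Reals.
From Stdlib Require Import Lra Lia Classical ClassicalEpsilon ZArith Wf_nat.
From Coquelicot Require Import Coquelicot.
Open Scope R_scope.

Lemma sorted_last_ge (x0 : R) (l : list R) :
  sorted Rle (x0 :: l) -> x0 <= seq.last x0 l.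
Proof.
  revert x0; induction l as [|y l IH]; intros x0 H; simpl; [lra|].
  destruct H as [H1 H2]. specialize (IH y H2). simpl in IH. lra.
Qed.

Lemma tele (F f : R -> R) a b (tag : R -> R -> R) :
 (forall x y, a <= x -> x <= y -> y <= b -> F y - F x = f (tag x y) * (y - x)) ->
 forall l x0, sorted Rle (x0 :: l) -> a <= x0 -> seq.last x0 l <= b ->
 Riemann_sum f (SF_seq_f2 tag (x0 :: l)) = F (seq.last x0 l) - F x0.
Proof.
  intros Hid l; induction l as [|y l IH]; intros x0 Hs Ha Hb.
  - simpl. unfold Riemann_sum. simpl. change (@zero R_ModuleSpace) with 0. lra.
  - rewrite SF_cons_f2; [|simpl; lia].
    rewrite Riemann_sum_cons. simpl in Hb. destruct Hs as [Hxy Hs].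
    pose proof (sorted_last_ge y l Hs) as Hy.
    rewrite (IH y Hs); [|lra|exact Hb].
    simpl. change (plus ?a ?b) with (a + b). change (scal ?a ?b) with (a * b).
    specialize (Hid x0 y Ha Hxy ltac:(lra)). simpl in *. lra.
Qed.

Definition mtag (F f : R -> R) (a b x y : R) : R :=
  epsilon (inhabits x) (fun c => (x <= y -> x <= c <= y) /\
     (a <= x -> x < y -> y <= b -> F y - F x = f c * (y - x))).

Lemma mtag_spec F f a b :
  (forall x, a <= x <= b -> derivable_pt_lim F x (f x)) ->
  forall x y, (x <= y -> x <= mtag F f a b x y <= y) /\
     (a <= x -> x < y -> y <= b -> F y - F x = f (mtag F f a b x y) * (y - x)).
Proof.
  intros Hd x y. unfold mtag. apply epsilon_spec.
  destruct (classic (a <= x /\ x < y /\ y <= b)) as [[H1 [H2 H3]]|Hn].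
  - destruct (MVT_cor2 F f x y H2) as [c [Hc1 Hc2]].
    { intros c Hc. apply Hd. lra. }
    exists c. split; [intros; lra|]. intros; exact Hc1.
  - exists x. split; [intros; lra|]. intros H1 H2 H3. exfalso; apply Hn; auto.
Qed.

Lemma ftc_gen F f a b : a <= b ->
  (forall x, a <= x <= b -> derivable_pt_lim F x (f x)) ->
  ex_RInt f a b -> RInt f a b = F b - F a.
Proof.
  intros Hab Hd Hex.
  destruct (Req_dec a b) as [<-|Hne].
  { rewrite RInt_point. change (@zero R_CompleteNormedModule) with 0. lra. }
  assert (Hlt : a < b) by lra.
  apply cond_eq. intros eps Heps.
  pose proof (RInt_correct _ _ _ Hex) as HI.
  specialize (HI (ball (RInt f a b) eps) (locally_ball _ (mkposreal eps Heps))).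
  destruct HI as [d Hd'].
  destruct (seq_step_unif_part_ex a b d) as [n Hn].
  set (tag := mtag F f a b).
  assert (Htb : forall a0 b0, a0 <= b0 -> a0 <= tag a0 b0 <= b0).
  { intros a0 b0 H. apply (mtag_spec F f a b Hd). exact H. }
  destruct (Riemann_fine_unif_part tag a b n Htb Hab) as [_ [Hptd [Hh Hl]]].
  assert (Hsz : (0 < seq.size (unif_part a b n))%nat).
  { unfold unif_part. rewrite seq.size_mkseq. lia. }
  specialize (Hd' (SF_seq_f2 tag (unif_part a b n))).
  rewrite SF_lx_f2 in Hd' by exact Hsz.
  specialize (Hd' Hn).
  assert (Hmin : Rmin a b = a) by (apply Rmin_left; lra).
  assert (Hmax : Rmax a b = b) by (apply Rmax_right; lra).
  rewrite Hmin, Hmax in Hd'.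
  rewrite SF_lx_f2 in Hl by exact Hsz.
  specialize (Hd' (conj Hptd (conj Hh Hl))).
  rewrite sign_eq_1 in Hd' by lra. change (scal 1 ?x) with (1 * x) in Hd'; rewrite Rmult_1_l in Hd'.
  assert (HRS : Riemann_sum f (SF_seq_f2 tag (unif_part a b n)) = F b - F a).
  { pose proof (last_unif_part 0 a b n) as HL. pose proof (head_unif_part 0 a b n) as HH.
    pose proof (unif_part_sort a b n Hab) as Hs.
    destruct (unif_part a b n) as [|x0 l]; [simpl in Hsz; lia|].
    simpl in HH. subst x0. simpl in HL.
    rewrite (tele F f a b tag); [rewrite HL; reflexivity | | exact Hs | lra | lra].
    intros x y H1 H2 H3.
    destruct (Rle_lt_or_eq_dec x y H2) as [H4|H4].
    - apply (mtag_spec F f a b Hd); assumption.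
    - subst y. ring.
  }
  change (@Riemann_sum _ f (SF_seq_f2 tag (unif_part a b n))) with (@Riemann_sum R_ModuleSpace f (SF_seq_f2 tag (unif_part a b n))) in Hd'.   rewrite HRS in Hd'. unfold ball in Hd'. simpl in Hd'. unfold AbsRing_ball in Hd'.
  rewrite Rabs_minus_sym. exact Hd'.
Qed.

Lemma dpl_cont f x l : derivable_pt_lim f x l ->
  forall eps, 0 < eps -> exists del, 0 < del /\ forall y, Rabs (y - x) < del -> Rabs (f y - f x) < eps.
Proof.
  intros H. assert (Hc : continuity_pt f x).
  { apply derivable_continuous_pt. exists l. exact H. }
  intros eps Heps. destruct (Hc eps Heps) as [del [Hdel Hy]].
  exists del. split; [exact Hdel|]. intros y Hy'.
  destruct (Req_dec y x) as [->|Hne].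
  - unfold Rminus. rewrite Rplus_opp_r, Rabs_R0. exact Heps.
  - apply (Hy y). split; [split; [exact I| auto]|]. exact Hy'.
Qed.

Lemma nonneg_lemma (f f' : R -> R) a b eta : 0 < eta ->
 (forall x, a <= x <= b -> derivable_pt_lim f x (f' x)) -> 0 <= f a ->
 (forall x, a <= x <= b -> -eta < f x < 0 -> 0 <= f' x) ->
 forall x, a <= x <= b -> 0 <= f x.
Proof.
  intros Heta Hd Ha Hpos x1 Hx1.
  destruct (Rle_or_lt 0 (f x1)) as [H|Hneg]; [exact H|exfalso].
  assert (Hax : a < x1).
  { destruct (Rle_lt_or_eq_dec a x1 (proj1 Hx1)) as [H|H]; [exact H|subst; lra]. }
  set (E := fun y => a <= y <= x1 /\ 0 <= f y).
  assert (Hb : bound E). { exists x1. intros y [Hy _]. lra. }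
  assert (He : exists y, E y). { exists a. split; [lra|exact Ha]. }
  destruct (completeness E Hb He) as [m [Hub Hlub]].
  assert (Ham : a <= m). { apply Hub. split; [lra|exact Ha]. }
  assert (Hmx : m <= x1). { apply Hlub. intros y [Hy _]. lra. }
  assert (Hdm : derivable_pt_lim f m (f' m)) by (apply Hd; lra).
  assert (Hfm : 0 <= f m).
  { destruct (Rle_or_lt 0 (f m)) as [H|H]; [exact H|exfalso].
    destruct (dpl_cont f m (f' m) Hdm (- f m) ltac:(lra)) as [del [Hdel Hc]].
    destruct (classic (exists y, E y /\ m - del < y)) as [[y [Ey Hy]]|Hno].
    - assert (y <= m) by (apply Hub; exact Ey).
      assert (Rabs (y - m) < del) by (apply Rabs_def1; lra).
      specialize (Hc y H1). destruct Ey as [_ Ey].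
      apply Rabs_def2 in Hc. lra.
    - assert (m <= m - del).
      { apply Hlub. intros y Ey. destruct (Rle_or_lt y (m - del)) as [H1|H1]; [exact H1|].
        exfalso; apply Hno; exists y; auto. }
      lra. }
  assert (Hmx' : m < x1).
  { destruct (Rle_lt_or_eq_dec m x1 Hmx) as [H|H]; [exact H|subst; lra]. }
  assert (Hneg' : forall y, m < y <= x1 -> f y < 0).
  { intros y Hy. destruct (Rle_or_lt 0 (f y)) as [H|H]; [|exact H].
    assert (y <= m) by (apply Hub; split; [lra|exact H]). lra. }
  destruct (dpl_cont f m (f' m) Hdm eta Heta) as [del [Hdel Hc]].
  set (x2 := Rmin x1 (m + del / 2)).
  assert (Hx2 : m < x2 <= x1).
  { unfold x2. split. apply Rmin_glb_lt; lra. apply Rmin_l. }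
  assert (Hx2' : x2 <= m + del / 2) by apply Rmin_r.
  destruct (MVT_cor2 f f' m x2 (proj1 Hx2)) as [c [Hmvt Hc2]].
  { intros c Hc'. apply Hd. lra. }
  assert (Hfc : f c < 0) by (apply Hneg'; lra).
  assert (Hfc' : - eta < f c).
  { assert (Rabs (c - m) < del) by (apply Rabs_def1; lra).
    specialize (Hc c H). apply Rabs_def2 in Hc. lra. }
  assert (0 <= f' c) by (apply Hpos; lra).
  assert (f x2 < 0) by (apply Hneg'; lra).
  assert (0 <= f' c * (x2 - m)) by (apply Rmult_le_pos; lra).
  lra.
Qed.

Lemma nonneg_weighted (d d' w w' A : R -> R) a b :
  (forall x, a <= x <= b -> derivable_pt_lim d x (d' x)) ->
  (forall x, a <= x <= b -> derivable_pt_lim w x (w' x)) ->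
  (forall x, a <= x <= b -> 0 < w x) ->
  (forall x, a <= x <= b -> A x * d x <= d' x) ->
  (forall x, a <= x <= b -> A x * w x <= w' x) ->
  0 <= d a -> forall x, a <= x <= b -> 0 <= d x.
Proof.
  intros Hd Hw Hwp Hdi Hwi Ha x Hx.
  assert (H : 0 <= (fun y => d y / w y) x).
  { apply (nonneg_lemma (fun y => d y / w y)
      (fun y => (d' y * w y - w' y * d y) / (w y)²) a b 1 ltac:(lra)); [| | |exact Hx].
    - intros y Hy. apply (derivable_pt_lim_div d w y); [apply Hd; exact Hy|apply Hw; exact Hy|].
      specialize (Hwp y Hy). lra.
    - unfold Rdiv. apply Rmult_le_pos; [exact Ha|]. left; apply Rinv_0_lt_compat; apply Hwp.
      lra.
    - intros y Hy [_ Hneg]. specialize (Hwp y Hy).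
      assert (Hdy : d y < 0).
      { destruct (Rle_or_lt 0 (d y)) as [H|H]; [|exact H].
        assert (0 <= d y / w y) by (unfold Rdiv; apply Rmult_le_pos; [exact H|left; apply Rinv_0_lt_compat; exact Hwp]).
        lra. }
      unfold Rdiv. apply Rmult_le_pos; [|left; apply Rinv_0_lt_compat; unfold Rsqr; nra].
      specialize (Hdi y Hy). specialize (Hwi y Hy). nra. }
  simpl in H.
  destruct (Rle_or_lt 0 (d x)) as [H1|H1]; [exact H1|].
  specialize (Hwp x Hx). assert (d x / w x < 0).
  { unfold Rdiv. apply Rmult_neg_pos; [exact H1|apply Rinv_0_lt_compat; exact Hwp]. }
  lra.
Qed.

Lemma exp_le x y : x <= y -> exp x <= exp y.
Proof. intros H; destruct (Rle_lt_or_eq_dec x y H) as [H1|H1]; [left; apply exp_increasing; exact H1|subst; lra]. Qed.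

Lemma cosh_ge1 u : 1 <= cosh u.
Proof.
  unfold cosh. rewrite exp_Ropp. pose proof (exp_pos u) as H.
  assert (exp u + / exp u - 2 = (exp u - 1)^2 / exp u) by (field; lra).
  assert (0 <= (exp u - 1)^2 / exp u) by (apply Rmult_le_pos; [apply pow2_ge_0|left; apply Rinv_0_lt_compat; exact H]).
  lra.
Qed.

Lemma cosh_le_e u : 0 <= u <= 1 -> cosh u <= exp 1.
Proof.
  intros Hu. unfold cosh.
  assert (exp (-u) <= exp u) by (apply exp_le; lra).
  assert (exp u <= exp 1) by (apply exp_le; lra). lra.
Qed.

Lemma comb_eq r h c :
  exp (- (r + 3 * h) * c) - 3 * exp (- (r + 2 * h) * c) + 3 * exp (- (r + h) * c) - exp (- r * c)
  = - exp (- r * c) * (1 - exp (- h * c)) ^ 3.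
Proof.
  replace (- (r + 3 * h) * c) with (- r * c + (- h * c + (- h * c + - h * c))) by ring.
  replace (- (r + 2 * h) * c) with (- r * c + (- h * c + - h * c)) by ring.
  replace (- (r + h) * c) with (- r * c + - h * c) by ring.
  rewrite !exp_plus. ring.
Qed.

Lemma one_m_exp h : 0 < h <= 1 -> h * / exp 1 <= 1 - exp (- h).
Proof.
  intros Hh. rewrite !exp_Ropp. pose proof (exp_pos h). pose proof (exp_pos 1).
  pose proof (exp_ineq1_le h).
  assert (exp h <= exp 1) by (apply exp_le; lra).
  assert (h * / exp 1 <= h * / exp h).
  { apply Rmult_le_compat_l; [lra|]. apply Rinv_le_contravar; lra. }
  assert (1 - / exp h = (exp h - 1) * / exp h) by (field; lra).
  assert (h * / exp h <= (exp h - 1) * / exp h).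
  { apply Rmult_le_compat_r; [left; apply Rinv_0_lt_compat; lra|lra]. }
  lra.
Qed.

Definition cK (R0 : R) : R := exp (- (R0 * exp 1)) * (/ exp 1) ^ 3.

Lemma cK_pos R0 : 0 < cK R0.
Proof. unfold cK. apply Rmult_lt_0_compat; [apply exp_pos|apply pow_lt; apply Rinv_0_lt_compat; apply exp_pos]. Qed.

Lemma cK_decr R1 R2 : R1 <= R2 -> cK R2 <= cK R1.
Proof.
  intros H. unfold cK. apply Rmult_le_compat_r; [left; apply pow_lt; apply Rinv_0_lt_compat; apply exp_pos|].
  apply exp_le. pose proof (exp_pos 1). nra.
Qed.

Lemma comb_bound r h R0 u : 0 < r -> 0 < h <= 1 -> r <= R0 -> 0 <= u ->
  exp (- (r + 3 * h) * cosh u) - 3 * exp (- (r + 2 * h) * cosh u) + 3 * exp (- (r + h) * cosh u) - exp (- r * cosh u)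
  <= (if Rle_dec u 1 then - cK R0 * h ^ 3 else 0).
Proof.
  intros Hr Hh HR Hu. rewrite comb_eq.
  pose proof (cosh_ge1 u) as Hc.
  assert (Hq : exp (- h * cosh u) <= exp (- h)) by (apply exp_le; nra).
  pose proof (one_m_exp h Hh) as H1.
  assert (He1 : 0 < / exp 1) by (apply Rinv_0_lt_compat; apply exp_pos).
  assert (H2 : 0 <= h * / exp 1) by nra.
  assert (H3 : (h * / exp 1) ^ 3 <= (1 - exp (- h * cosh u)) ^ 3) by (apply pow_incr; lra).
  pose proof (exp_pos (- r * cosh u)) as Hp.
  destruct (Rle_dec u 1) as [Hu1|Hu1].
  - assert (Hce : cosh u <= exp 1) by (apply cosh_le_e; lra).
    assert (He : exp (- (R0 * exp 1)) <= exp (- r * cosh u)).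
    { apply exp_le. pose proof (exp_pos 1). nra. }
    unfold cK.
    replace ((h * / exp 1) ^ 3) with (h ^ 3 * (/ exp 1) ^ 3) in H3 by ring.
    assert (0 < (/ exp 1) ^ 3) by (apply pow_lt; exact He1). pose proof (exp_pos (- (R0 * exp 1))).
    assert (0 <= h ^ 3) by (apply pow_le; lra).
    assert (exp (- (R0 * exp 1)) * (h ^ 3 * (/ exp 1) ^ 3) <= exp (- r * cosh u) * (1 - exp (- h * cosh u)) ^ 3).
    { apply Rmult_le_compat; try lra. apply Rmult_le_pos; lra. }
    lra.
  - assert (0 <= (1 - exp (- h * cosh u)) ^ 3) by (apply pow_le; lra).
    assert (0 <= exp (- r * cosh u) * (1 - exp (- h * cosh u)) ^ 3) by (apply Rmult_le_pos; lra).
    lra.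
Qed.

Lemma is_RInt_val (f : R -> R) a b l l' : is_RInt f a b l -> l = l' -> is_RInt f a b l'.
Proof. intros H ->; exact H. Qed.

Lemma K0_third K0 : is_BesselK0 K0 -> forall r h R0, 0 < r -> 0 < h <= 1 -> r <= R0 ->
 K0 (r + 3 * h) - 3 * K0 (r + 2 * h) + 3 * K0 (r + h) - K0 r <= - cK R0 * h ^ 3.
Proof.
  intros hK0 r h R0 Hr Hh HR.
  apply Rle_plus_epsilon. intros eps Heps.
  assert (He : 0 < eps / 8) by lra.
  destruct (hK0 (r + 3 * h) ltac:(lra) _ He) as [M3 HM3].
  destruct (hK0 (r + 2 * h) ltac:(lra) _ He) as [M2 HM2].
  destruct (hK0 (r + h) ltac:(lra) _ He) as [M1 HM1].
  destruct (hK0 r ltac:(lra) _ He) as [M0 HM0].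
  set (b := Rmax (Rmax (Rmax M0 M1) (Rmax M2 M3)) 1 + 1).
  assert (Hb1 : 1 < b).
  { unfold b. pose proof (Rmax_r (Rmax (Rmax M0 M1) (Rmax M2 M3)) 1). lra. }
  assert (HbM : M0 < b /\ M1 < b /\ M2 < b /\ M3 < b).
  { unfold b. pose proof (Rmax_l (Rmax (Rmax M0 M1) (Rmax M2 M3)) 1).
    pose proof (Rmax_l (Rmax M0 M1) (Rmax M2 M3)). pose proof (Rmax_r (Rmax M0 M1) (Rmax M2 M3)).
    pose proof (Rmax_l M0 M1). pose proof (Rmax_r M0 M1). pose proof (Rmax_l M2 M3). pose proof (Rmax_r M2 M3).
    lra. }
  destruct HbM as [Hb0 [Hb1' [Hb2 Hb3]]].
  destruct (HM3 b Hb3) as [pr3 H3]. destruct (HM2 b Hb2) as [pr2 H2].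
  destruct (HM1 b Hb1') as [pr1 H1]. destruct (HM0 b Hb0) as [pr0 H0].
  pose proof (RInt_Reals _ _ _ pr3) as E3. pose proof (RInt_Reals _ _ _ pr2) as E2.
  pose proof (RInt_Reals _ _ _ pr1) as E1. pose proof (RInt_Reals _ _ _ pr0) as E0.
  pose proof (RInt_correct _ _ _ (ex_RInt_Reals_1 _ _ _ pr3)) as I3.
  pose proof (RInt_correct _ _ _ (ex_RInt_Reals_1 _ _ _ pr2)) as I2.
  pose proof (RInt_correct _ _ _ (ex_RInt_Reals_1 _ _ _ pr1)) as I1.
  pose proof (RInt_correct _ _ _ (ex_RInt_Reals_1 _ _ _ pr0)) as I0.
  rewrite E3 in I3. rewrite E2 in I2. rewrite E1 in I1. rewrite E0 in I0.
  set (comb := fun u => exp (- (r + 3 * h) * cosh u) - 3 * exp (- (r + 2 * h) * cosh u)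
          + 3 * exp (- (r + h) * cosh u) - exp (- r * cosh u)).
  assert (Hc : is_RInt comb 0 b (RiemannInt pr3 - 3 * RiemannInt pr2 + 3 * RiemannInt pr1 - RiemannInt pr0)).
  { pose proof (is_RInt_minus _ _ _ _ _ _ (is_RInt_plus _ _ _ _ _ _ (is_RInt_minus _ _ _ _ _ _ I3 (is_RInt_scal _ _ _ 3 _ I2)) (is_RInt_scal _ _ _ 3 _ I1)) I0) as HH.
    apply (is_RInt_ext _ comb) in HH.
    - exact HH.
    - intros x _. reflexivity. }
  assert (Hex : ex_RInt comb 0 b) by (eexists; exact Hc).
  apply (@is_RInt_unique R_CompleteNormedModule) in Hc.
  assert (Hle : RInt comb 0 b <= - cK R0 * h ^ 3).
  { rewrite <- (RInt_Chasles comb 0 1 b).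
    2:{ apply (ex_RInt_Chasles_1 _ _ _ _ (conj (Rle_0_1) (Rlt_le _ _ Hb1)) Hex). }
    2:{ apply (ex_RInt_Chasles_2 _ _ _ _ (conj (Rle_0_1) (Rlt_le _ _ Hb1)) Hex). }
    assert (A1 : RInt comb 0 1 <= RInt (fun _ => - cK R0 * h ^ 3) 0 1).
    { apply RInt_le; [lra| apply (ex_RInt_Chasles_1 _ _ _ _ (conj (Rle_0_1) (Rlt_le _ _ Hb1)) Hex)|apply ex_RInt_const|].
      intros x Hx. pose proof (comb_bound r h R0 x Hr Hh HR ltac:(lra)) as HB.
      destruct (Rle_dec x 1); [exact HB|lra]. }
    assert (A2 : RInt comb 1 b <= RInt (fun _ => 0) 1 b).
    { apply RInt_le; [lra| apply (ex_RInt_Chasles_2 _ _ _ _ (conj (Rle_0_1) (Rlt_le _ _ Hb1)) Hex)|apply ex_RInt_const|].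
      intros x Hx. pose proof (comb_bound r h R0 x Hr Hh HR ltac:(lra)) as HB.
      destruct (Rle_dec x 1); [lra|exact HB]. }
    rewrite RInt_const in A1. rewrite RInt_const in A2.
    change (scal ?a ?b) with (a * b) in A1, A2. change (plus ?a ?b) with (a + b). lra. }
  rewrite Hc in Hle.
  apply Rabs_def2 in H3. apply Rabs_def2 in H2. apply Rabs_def2 in H1. apply Rabs_def2 in H0.
  lra.
Qed.

Lemma dpl_affine f l x0 c s : derivable_pt_lim f (x0 + c * s) l ->
  derivable_pt_lim (fun s => f (x0 + c * s)) s (c * l).
Proof.
  intros H.
  assert (Ha : derivable_pt_lim (fun s => x0 + c * s) s c).
  { apply is_derive_Reals. auto_derive; [exact I|ring]. }
  pose proof (derivable_pt_lim_comp _ _ _ _ _ Ha H) as HH.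
  unfold comp in HH. replace (c * l) with (l * c) by ring. exact HH.
Qed.

Lemma D2_mvt (K0 K1 K2 : R -> R) :
  (forall r, 0 < r -> derivable_pt_lim K0 r (K1 r)) ->
  (forall r, 0 < r -> derivable_pt_lim K1 r (K2 r)) ->
  forall x h, 0 < x -> 0 < h -> exists xi, x < xi < x + 2 * h /\
    K0 (x + 2 * h) - 2 * K0 (x + h) + K0 x = h ^ 2 * K2 xi.
Proof.
  intros hK1 hK2 x h Hx Hh.
  set (D := K0 (x + 2 * h) - 2 * K0 (x + h) + K0 x).
  set (A := D / h ^ 2).
  set (G := fun s => K0 (x + 2 * s) - 2 * K0 (x + 1 * s) + K0 x - A * s ^ 2).
  set (G' := fun s => 2 * K1 (x + 2 * s) - 2 * (1 * K1 (x + 1 * s)) + 0 - A * (INR 2 * s ^ 1)).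
  destruct (MVT_cor2 G G' 0 h Hh) as [c [Hm Hc]].
  { intros c Hc. unfold G, G'.
    apply derivable_pt_lim_minus; [apply derivable_pt_lim_plus; [apply derivable_pt_lim_minus|]|].
    - apply dpl_affine. apply hK1. lra.
    - apply derivable_pt_lim_scal. apply dpl_affine. apply hK1. lra.
    - apply derivable_pt_lim_const.
    - apply derivable_pt_lim_scal. apply derivable_pt_lim_pow. }
  unfold G, G' in Hm.
  assert (HA : A * h ^ 2 = D) by (unfold A; field; lra).
  replace (x + 2 * h) with (x + 2 * h) in Hm by ring.
  assert (Hz : 2 * K1 (x + 2 * c) - 2 * (1 * K1 (x + 1 * c)) + 0 - A * (INR 2 * c ^ 1) = 0).
  { replace (x + 2 * 0) with x in Hm by ring. replace (x + 1 * 0) with x in Hm by ring.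
    replace (x + 1 * h) with (x + h) in Hm by ring. fold D in Hm.
    assert (Hm' : (2 * K1 (x + 2 * c) - 2 * (1 * K1 (x + 1 * c)) + 0 - A * (INR 2 * c ^ 1)) * h = 0).
    { rewrite Rminus_0_r in Hm. rewrite <- Hm. simpl. simpl in HA. rewrite HA. unfold D. ring. }
    apply Rmult_integral in Hm'. destruct Hm'; [assumption|lra]. }
  simpl in Hz.
  destruct (MVT_cor2 K1 K2 (x + c) (x + 2 * c) ltac:(lra)) as [xi [Hm2 Hxi]].
  { intros y Hy. apply hK2. lra. }
  exists xi. split; [lra|].
  replace (x + 1 * c) with (x + c) in Hz by ring.
  assert (A * c = K2 xi * c) by nra.
  assert (A = K2 xi).
  { apply (Rmult_eq_reg_r c); [exact H|lra]. }
  fold D. rewrite <- HA, H0. ring.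
Qed.

Lemma K2_decr (K0 K1 K2 K3 : R -> R) : is_BesselK0 K0 ->
  (forall r, 0 < r -> derivable_pt_lim K0 r (K1 r)) ->
  (forall r, 0 < r -> derivable_pt_lim K1 r (K2 r)) ->
  (forall r, 0 < r -> derivable_pt_lim K2 r (K3 r)) ->
  forall x y R0, 0 < x < y -> y <= R0 -> K2 y <= K2 x - cK R0 * (y - x).
Proof.
  intros hK0 hK1 hK2 hK3 x y R0 Hxy HyR.
  set (c := cK R0). assert (Hc : 0 < c) by apply cK_pos.
  assert (Hstep : forall N : nat, (1 <= N)%nat -> (y - x) / INR N <= 1 ->
     exists xi1 xi2, x < xi1 < x + 2 * ((y - x) / INR N) /\ y < xi2 < y + 2 * ((y - x) / INR N) /\
       K2 xi2 <= K2 xi1 - c * (y - x)).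
  { intros N HN Hh1. set (h := (y - x) / INR N).
    assert (HNp : 0 < INR N) by (apply lt_0_INR; lia).
    assert (Hh : 0 < h) by (unfold h; apply Rdiv_lt_0_compat; lra).
    set (D2 := fun z => K0 (z + 2 * h) - 2 * K0 (z + h) + K0 z).
    assert (Hit : forall i, (i <= N)%nat -> D2 (x + INR i * h) <= D2 x - INR i * c * h ^ 3).
    { induction i as [|i IH]; intros Hi.
      - simpl. replace (x + 0 * h) with x by ring. lra.
      - specialize (IH ltac:(lia)). rewrite S_INR.
        assert (Hz : x + INR i * h <= y).
        { assert (INR i * h <= INR N * h).
          { apply Rmult_le_compat_r; [lra|]. apply le_INR; lia. }
          assert (INR N * h = y - x) by (unfold h; field; lra). lra. }
        assert (Hz0 : 0 < x + INR i * h) by (pose proof (pos_INR i); nra).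
        pose proof (K0_third K0 hK0 (x + INR i * h) h R0 Hz0 (conj Hh Hh1) ltac:(lra)) as HT.
        unfold D2 in *. fold c in HT.
        replace (x + (INR i + 1) * h) with (x + INR i * h + h) by ring.
        replace (x + INR i * h + h + 2 * h) with (x + INR i * h + 3 * h) by ring.
        replace (x + INR i * h + h + h) with (x + INR i * h + 2 * h) by ring.
        lra. }
    specialize (Hit N (le_n N)).
    assert (HNh : x + INR N * h = y) by (unfold h; field; lra).
    rewrite HNh in Hit.
    destruct (D2_mvt K0 K1 K2 hK1 hK2 x h ltac:(lra) Hh) as [xi1 [Hx1 E1]].
    destruct (D2_mvt K0 K1 K2 hK1 hK2 y h ltac:(lra) Hh) as [xi2 [Hx2 E2]].
    exists xi1, xi2. split; [exact Hx1|]. split; [exact Hx2|].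
    unfold D2 in Hit. rewrite E1, E2 in Hit.
    assert (Hh2 : 0 < h ^ 2) by (apply pow_lt; lra).
    assert (h ^ 2 * K2 xi2 <= h ^ 2 * (K2 xi1 - c * (y - x))).
    { replace (h ^ 2 * (K2 xi1 - c * (y - x))) with (h ^ 2 * K2 xi1 - INR N * c * h ^ 3).
      - exact Hit.
      - replace (y - x) with (INR N * h) by (rewrite <- HNh; ring). ring. }
    apply Rmult_le_reg_l in H; [exact H|exact Hh2]. }
  destruct (Rle_or_lt (K2 y) (K2 x - c * (y - x))) as [H|H]; [exact H|exfalso].
  set (eps := (K2 y - (K2 x - c * (y - x))) / 2).
  assert (Heps : 0 < eps) by (unfold eps; lra).
  assert (Hxp : 0 < x) by lra. assert (Hyp : 0 < y) by lra.
  destruct (dpl_cont K2 x (K3 x) (hK3 x Hxp) eps Heps) as [d1 [Hd1 C1]].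
  destruct (dpl_cont K2 y (K3 y) (hK3 y Hyp) eps Heps) as [d2 [Hd2 C2]].
  set (d := Rmin (Rmin d1 d2) 1).
  assert (Hd : 0 < d) by (unfold d; apply Rmin_glb_lt; [apply Rmin_glb_lt|]; lra).
  destruct (archimed (2 * (y - x) / d)) as [Ha _].
  set (N := Z.to_nat (up (2 * (y - x) / d))).
  assert (HN : 2 * (y - x) / d < INR N).
  { unfold N. rewrite INR_IZR_INZ, Z2Nat.id; [exact Ha|].
    apply le_IZR. assert (0 < 2 * (y - x) / d) by (apply Rdiv_lt_0_compat; lra). lra. }
  assert (HN1 : (1 <= N)%nat).
  { destruct N as [|N']; [simpl in HN; assert (0 < 2 * (y - x) / d) by (apply Rdiv_lt_0_compat; lra); lra|lia]. }
  assert (HNp : 0 < INR N) by (apply lt_0_INR; lia).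
  assert (Hhd : 2 * ((y - x) / INR N) < d).
  { apply (Rmult_lt_reg_r (INR N)); [exact HNp|].
    replace (2 * ((y - x) / INR N) * INR N) with (2 * (y - x)) by (field; lra).
    apply (Rmult_lt_compat_l d) in HN; [|exact Hd].
    replace (d * (2 * (y - x) / d)) with (2 * (y - x)) in HN by (field; lra). lra. }
  assert (Hdd : d <= d1 /\ d <= d2 /\ d <= 1).
  { unfold d. pose proof (Rmin_l (Rmin d1 d2) 1). pose proof (Rmin_r (Rmin d1 d2) 1).
    pose proof (Rmin_l d1 d2). pose proof (Rmin_r d1 d2). lra. }
  assert (Hh1 : (y - x) / INR N <= 1).
  { assert (0 < (y - x) / INR N) by (apply Rdiv_lt_0_compat; lra). lra. }
  destruct (Hstep N HN1 Hh1) as [xi1 [xi2 [Hx1 [Hx2 Hk]]]].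
  assert (Rabs (xi1 - x) < d1) by (apply Rabs_def1; lra).
  assert (Rabs (xi2 - y) < d2) by (apply Rabs_def1; lra).
  specialize (C1 xi1 H0). specialize (C2 xi2 H1).
  apply Rabs_def2 in C1. apply Rabs_def2 in C2.
  unfold eps in *. lra.
Qed.

Lemma K3_neg (K0 K1 K2 K3 : R -> R) : is_BesselK0 K0 ->
  (forall r, 0 < r -> derivable_pt_lim K0 r (K1 r)) ->
  (forall r, 0 < r -> derivable_pt_lim K1 r (K2 r)) ->
  (forall r, 0 < r -> derivable_pt_lim K2 r (K3 r)) ->
  forall x R0, 0 < x -> x + 1 <= R0 -> K3 x <= - cK R0.
Proof.
  intros hK0 hK1 hK2 hK3 x R0 Hx HR.
  destruct (Rle_or_lt (K3 x) (- cK R0)) as [H|H]; [exact H|exfalso].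
  pose proof (hK3 x Hx (K3 x + cK R0) ltac:(lra)) as [del Hdel].
  set (h := Rmin (del / 2) 1).
  assert (Hh : 0 < h) by (unfold h; apply Rmin_glb_lt; [pose proof (cond_pos del)|]; lra).
  assert (Hh1 : h <= 1) by apply Rmin_r.
  assert (Hhd : h < del) by (unfold h; pose proof (Rmin_l (del/2) 1); pose proof (cond_pos del); lra).
  specialize (Hdel h ltac:(lra) ltac:(rewrite Rabs_pos_eq; lra)).
  pose proof (K2_decr K0 K1 K2 K3 hK0 hK1 hK2 hK3 x (x + h) R0 ltac:(lra) ltac:(lra)) as Hd.
  apply Rabs_def2 in Hdel.
  assert ((K2 (x + h) - K2 x) / h <= - cK R0).
  { apply (Rmult_le_reg_r h); [exact Hh|]. replace ((K2 (x + h) - K2 x) / h * h) with (K2 (x + h) - K2 x) by (field; lra).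
    replace (x + h - x) with h in Hd by ring. lra. }
  lra.
Qed.

Lemma g_pos (K0 K1 K2 K3 g : R -> R) : is_BesselK0 K0 ->
  (forall r, 0 < r -> derivable_pt_lim K0 r (K1 r)) ->
  (forall r, 0 < r -> derivable_pt_lim K1 r (K2 r)) ->
  (forall r, 0 < r -> derivable_pt_lim K2 r (K3 r)) ->
  is_g K3 g -> forall s, 0 < s -> 0 < g s.
Proof.
  intros hK0 hK1 hK2 hK3 hg s Hs.
  destruct (hg s Hs) as [I [Himp Hgs]].
  set (hh := fun r => K3 r * r / sqrt (r ^ 2 - s ^ 2)).
  set (c1 := cK (s + 3)). assert (Hc1 : 0 < c1) by apply cK_pos.
  assert (Hhh : forall r, s < r -> hh r <= K3 r /\ K3 r <= - cK (r + 1)).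
  { intros r Hr. unfold hh.
    assert (H3 : K3 r <= - cK (r + 1)) by (apply (K3_neg K0 K1 K2 K3); auto; lra).
    pose proof (cK_pos (r + 1)).
    assert (Hq : 0 < r ^ 2 - s ^ 2) by nra.
    pose proof (sqrt_lt_R0 _ Hq) as Hsq.
    assert (Hsr : sqrt (r ^ 2 - s ^ 2) <= r).
    { pose proof (sqrt_le_1_alt (r ^ 2 - s ^ 2) (r ^ 2) ltac:(nra)) as Hq2.
      rewrite sqrt_pow2 in Hq2 by lra. exact Hq2. }
    split; [|exact H3].
    assert (1 <= r / sqrt (r ^ 2 - s ^ 2)).
    { apply (Rmult_le_reg_r (sqrt (r ^ 2 - s ^ 2))); [exact Hsq|].
      replace (r / sqrt (r ^ 2 - s ^ 2) * sqrt (r ^ 2 - s ^ 2)) with r by (field; lra). lra. }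
    unfold Rdiv. rewrite Rmult_assoc. fold (Rdiv r (sqrt (r ^ 2 - s ^ 2))). nra. }
  assert (HI : I <= - c1 / 2).
  { destruct (Himp (c1 / 2) ltac:(lra)) as [del [Hdel [M HM]]].
    set (u := s + Rmin del 1 / 2). set (u0 := s + 1). set (b0 := s + 2).
    set (b := Rmax M b0 + 1).
    assert (Hu : s < u < s + del /\ u < u0).
    { unfold u, u0. pose proof (Rmin_l del 1). pose proof (Rmin_r del 1).
      assert (0 < Rmin del 1) by (apply Rmin_glb_lt; lra). lra. }
    assert (Hb : M < b /\ b0 < b).
    { unfold b. pose proof (Rmax_l M b0). pose proof (Rmax_r M b0). lra. }
    destruct (HM u b (proj1 Hu) (proj1 Hb)) as [pr Hpr].
    rewrite <- RInt_Reals in Hpr.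
    pose proof (ex_RInt_Reals_1 _ _ _ pr) as Hex. fold hh in Hex, Hpr.
    assert (Hord : u <= u0 <= b) by (unfold u0, b0 in *; lra).
    assert (Hord2 : u0 <= b0 <= b) by (unfold u0, b0 in *; lra).
    assert (Ex1 : ex_RInt hh u u0) by exact (ex_RInt_Chasles_1 _ _ _ _ Hord Hex).
    assert (Ex2 : ex_RInt hh u0 b) by exact (ex_RInt_Chasles_2 _ _ _ _ Hord Hex).
    assert (Ex3 : ex_RInt hh u0 b0) by exact (ex_RInt_Chasles_1 _ _ _ _ Hord2 Ex2).
    assert (Ex4 : ex_RInt hh b0 b) by exact (ex_RInt_Chasles_2 _ _ _ _ Hord2 Ex2).
    rewrite <- (RInt_Chasles hh u u0 b Ex1 Ex2) in Hpr.
    rewrite <- (RInt_Chasles hh u0 b0 b Ex3 Ex4) in Hpr.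
    assert (A1 : RInt hh u u0 <= RInt (fun _ => 0) u u0).
    { apply RInt_le; [lra|exact Ex1|apply ex_RInt_const|].
      intros x Hx. destruct (Hhh x ltac:(lra)) as [Ha Hb']. pose proof (cK_pos (x + 1)). lra. }
    assert (A2 : RInt hh u0 b0 <= RInt (fun _ => - c1) u0 b0).
    { apply RInt_le; [lra|exact Ex3|apply ex_RInt_const|].
      intros x Hx. destruct (Hhh x ltac:(unfold u0 in Hx; lra)) as [Ha Hb'].
      pose proof (cK_decr (x + 1) (s + 3) ltac:(unfold b0 in Hx; lra)). fold c1 in H. lra. }
    assert (A3 : RInt hh b0 b <= RInt (fun _ => 0) b0 b).
    { apply RInt_le; [lra|exact Ex4|apply ex_RInt_const|].
      intros x Hx. destruct (Hhh x ltac:(unfold b0 in Hx; lra)) as [Ha Hb']. pose proof (cK_pos (x + 1)). lra. }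
    rewrite !RInt_const in A1, A2, A3.
    change (scal ?a ?b) with (a * b) in A1, A2, A3. change (plus ?a ?b) with (a + b) in Hpr. change (plus ?a ?b) with (a + b) in Hpr.
    apply Rabs_def2 in Hpr. unfold u0, b0 in *. lra. }
  rewrite Hgs.
  assert (0 < s / (4 * PI)) by (apply Rdiv_lt_0_compat; [lra|pose proof PI_RGT_0; lra]).
  nra.
Qed.

Definition clamp (a b y : R) := Rmax a (Rmin b y).

Lemma clamp_lip a b x y : a <= b -> Rabs (clamp a b y - clamp a b x) <= Rabs (y - x).
Proof.
  intros Hab. unfold clamp, Rmax, Rmin.
  repeat destruct Rle_dec; apply Rabs_le; split;
  (destruct (Rcase_abs (y - x)) as [H|H]; [rewrite Rabs_left by lra|rewrite Rabs_right by lra]); lra.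
Qed.

Lemma clamp_id a b y : a <= y <= b -> clamp a b y = y.
Proof. intros H. unfold clamp, Rmax, Rmin. repeat destruct Rle_dec; lra. Qed.

Lemma clamp_in a b y : a <= b -> a <= clamp a b y <= b.
Proof. intros H. unfold clamp, Rmax, Rmin. repeat destruct Rle_dec; lra. Qed.

Lemma clamp_cont a b (f : R -> R) x : a <= b ->
  (forall z, a <= z <= b -> continuity_pt f z) -> continuity_pt (fun y => f (clamp a b y)) x.
Proof.
  intros Hab Hf.
  change (continuity_pt (comp f (clamp a b)) x).
  apply continuity_pt_comp; [|apply Hf; apply clamp_in; exact Hab].
  intros eps Heps. exists eps. split; [exact Heps|].
  intros y [_ Hy]. simpl in *. unfold R_dist in *.
  pose proof (clamp_lip a b x y Hab). lra.
Qed.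

Lemma partB (t0 t kap : R) (Bf Gf C2 Bint : R -> R) (tau : R) :
  0 < t0 -> t0 < t -> 0 < kap ->
  (forall s, t0 <= s <= t -> 0 < Bf s) ->
  (forall s, t0 <= s <= t -> Gf s = PI / 2 * s ^ 2 * Bf s) ->
  C2 t0 = 0 ->
  (forall s, t0 <= s <= t -> derivable_pt_lim C2 s (kap * Bf s * C2 s + Gf s)) ->
  (forall s, t0 <= s <= t -> RInt_is Bf s t (Bint s)) ->
  RInt_is (fun s => Gf s * exp (kap * Bint s)) t0 t tau ->
  (forall s, t0 <= s <= t -> 0 <= C2 s) /\ tau = C2 t /\ 0 < C2 t /\
  (forall p, 0 <= p -> exists w w', (forall x, t0 <= x <= t -> derivable_pt_lim w x (w' x)) /\
      (forall x, t0 <= x <= t -> 0 < w x) /\ (forall x, t0 <= x <= t -> p * Bf x * w x <= w' x)).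
Proof.
  intros Ht0 Ht Hk HB HG HC0 HC HBint Htau.
  pose proof PI_RGT_0 as Hpi.
  set (v := fun s => C2 s + PI * s ^ 2 / (2 * kap)).
  assert (Hv : forall s, t0 <= s <= t -> kap * Bf s * C2 s + Gf s = kap * Bf s * v s).
  { intros s Hs. unfold v. rewrite HG by exact Hs. field. lra. }
  assert (HC2 : forall s, t0 <= s <= t -> 0 <= C2 s).
  { apply (nonneg_lemma C2 (fun s => kap * Bf s * C2 s + Gf s) t0 t (PI * t0 ^ 2 / (2 * kap))).
    - apply Rdiv_lt_0_compat; [apply Rmult_lt_0_compat; [lra|apply pow_lt; lra]|lra].
    - exact HC.
    - lra.
    - intros x Hx [H1 H2]. rewrite Hv by exact Hx.
      assert (PI * t0 ^ 2 / (2 * kap) <= PI * x ^ 2 / (2 * kap)).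
      { unfold Rdiv. apply Rmult_le_compat_r; [left; apply Rinv_0_lt_compat; lra|].
        apply Rmult_le_compat_l; [lra|]. apply pow_incr; lra. }
      assert (0 < v x) by (unfold v; lra).
      specialize (HB x Hx). apply Rmult_le_pos; [apply Rmult_le_pos|]; lra. }
  assert (Hvp : forall s, t0 <= s <= t -> 0 < v s).
  { intros s Hs. unfold v. specialize (HC2 s Hs).
    assert (0 < PI * s ^ 2 / (2 * kap)).
    { apply Rdiv_lt_0_compat; [apply Rmult_lt_0_compat; [lra|apply pow_lt; lra]|lra]. }
    lra. }
  assert (Hdv : forall s, t0 <= s <= t -> derivable_pt_lim v s (kap * Bf s * v s + PI * s / kap)).
  { intros s Hs. unfold v.
    assert (H1 : derivable_pt_lim (fun s => PI * s ^ 2 / (2 * kap)) s (PI * s / kap)).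
    { apply is_derive_Reals. auto_derive; [exact I|field; lra]. }
    pose proof (derivable_pt_lim_plus _ _ _ _ _ (HC s Hs) H1) as H2.
    rewrite <- Hv by exact Hs. exact H2. }
  set (phi0 := fun s => PI * s / (kap * v s)).
  set (phi := fun s => phi0 (clamp t0 t s)).
  assert (Hphic : forall x, continuity_pt phi x).
  { intros x. apply clamp_cont; [lra|]. intros z Hz.
    apply (continuity_pt_div (fun s => PI * s) (fun s => kap * v s)).
    - apply continuity_pt_mult; [apply continuity_pt_const; intros a b; reflexivity|apply continuity_pt_id].
    - apply continuity_pt_mult; [apply continuity_pt_const; intros a b; reflexivity|].
      apply derivable_continuous_pt. exists (kap * Bf z * v z + PI * z / kap). apply Hdv; exact Hz.
    - specialize (Hvp z Hz). nra. }
  assert (Hphiex : forall a b, ex_RInt phi a b).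
  { intros a b. apply (@ex_RInt_continuous R_CompleteNormedModule). intros z _. apply continuity_pt_filterlim. apply Hphic. }
  set (J := fun x => RInt phi x t).
  assert (HdJ : forall x, derivable_pt_lim J x (- phi x)).
  { intros x. apply is_derive_Reals.
    apply (is_derive_RInt' phi J x t).
    - apply filter_forall. intros a0. unfold J. apply (@RInt_correct R_CompleteNormedModule). apply Hphiex.
    - apply continuity_pt_filterlim. apply Hphic. }
  set (L := fun x => ln (v x)).
  assert (HdL : forall x, t0 <= x <= t -> derivable_pt_lim L x (kap * Bf x + phi x)).
  { intros x Hx. unfold L.
    pose proof (derivable_pt_lim_comp v ln x _ _ (Hdv x Hx) (derivable_pt_lim_ln _ (Hvp x Hx))) as H.
    unfold comp in H. unfold phi, phi0. rewrite clamp_id by exact Hx.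
    specialize (Hvp x Hx).
    replace (kap * Bf x + PI * x / (kap * v x)) with (/ v x * (kap * Bf x * v x + PI * x / kap)) by (field; lra).
    exact H. }
  assert (HBJ : forall s, t0 <= s <= t -> kap * Bint s + J s = L t - L s).
  { intros s Hs. destruct (HBint s Hs) as [pr Hpr].
    pose proof (ex_RInt_Reals_1 _ _ _ pr) as HexB.
    assert (HRB : RInt Bf s t = Bint s) by (rewrite RInt_Reals with (pr := pr); exact Hpr).
    pose proof (is_RInt_plus _ _ _ _ _ _ (is_RInt_scal _ _ _ kap _ (RInt_correct _ _ _ HexB)) (RInt_correct _ _ _ (Hphiex s t))) as HI.
    assert (HI' : is_RInt (fun x => kap * Bf x + phi x) s t (kap * Bint s + J s)).
    { apply (is_RInt_ext _ (fun x => kap * Bf x + phi x)) in HI; [|intros; reflexivity].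
      rewrite HRB in HI. exact HI. }
    assert (Hex : ex_RInt (fun x => kap * Bf x + phi x) s t) by (eexists; exact HI').
    apply (@is_RInt_unique R_CompleteNormedModule) in HI'.
    rewrite <- HI'. apply ftc_gen; [lra| |exact Hex].
    intros x Hx. apply HdL. lra. }
  set (Et := fun x => exp (L t - L x - J x)).
  assert (HEt : forall x, t0 <= x <= t -> Et x = exp (kap * Bint x)).
  { intros x Hx. unfold Et. f_equal. rewrite <- (HBJ x Hx). ring. }
  set (H := fun x => C2 x * Et x).
  assert (HdH : forall x, t0 <= x <= t -> derivable_pt_lim H x (Gf x * Et x)).
  { intros x Hx.
    assert (Hin : derivable_pt_lim (fun x => L t - L x - J x) x (0 - (kap * Bf x + phi x) - - phi x)).
    { apply derivable_pt_lim_minus; [apply derivable_pt_lim_minus|].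
      - apply derivable_pt_lim_const. - apply HdL; exact Hx. - apply HdJ. }
    pose proof (derivable_pt_lim_comp _ exp x _ _ Hin (derivable_pt_lim_exp _)) as HE.
    unfold comp in HE.
    pose proof (derivable_pt_lim_mult _ _ _ _ _ (HC x Hx) HE) as HM.
    unfold H, Et. replace (Gf x * exp (L t - L x - J x)) with
      ((kap * Bf x * C2 x + Gf x) * exp (L t - L x - J x) +
       C2 x * (exp (L t - L x - J x) * (0 - (kap * Bf x + phi x) - - phi x))) by ring.
    exact HM. }
  assert (Htau' : tau = C2 t).
  { destruct Htau as [pr Hpr].
    pose proof (ex_RInt_Reals_1 _ _ _ pr) as Hex.
    rewrite <- RInt_Reals in Hpr.
    assert (Hext : forall x, Rmin t0 t < x < Rmax t0 t -> Gf x * exp (kap * Bint x) = Gf x * Et x).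
    { intros x Hx. rewrite Rmin_left, Rmax_right in Hx by lra. rewrite HEt by lra. reflexivity. }
    rewrite (RInt_ext _ _ _ _ Hext) in Hpr.
    apply (ex_RInt_ext _ _ _ _ Hext) in Hex.
    rewrite (ftc_gen H _ t0 t ltac:(lra) HdH Hex) in Hpr.
    unfold H, Et in Hpr. rewrite HC0 in Hpr.
    assert (J t = 0) by (unfold J; rewrite RInt_point; reflexivity).
    rewrite H0 in Hpr. replace (L t - L t - 0) with 0 in Hpr by ring.
    rewrite exp_0 in Hpr. lra. }
  split; [exact HC2|]. split; [exact Htau'|].
  split.
  2:{ intros p Hp.
    exists (fun x => exp (p / kap * ln (v x))),
      (fun x => exp (p / kap * ln (v x)) * (p / kap * (/ v x * (kap * Bf x * v x + PI * x / kap)))).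
    split; [|split].
    - intros x Hx.
      pose proof (derivable_pt_lim_comp v ln x _ _ (Hdv x Hx) (derivable_pt_lim_ln _ (Hvp x Hx))) as H1.
      unfold comp in H1.
      pose proof (derivable_pt_lim_scal _ (p / kap) _ _ H1) as H2.
      pose proof (derivable_pt_lim_comp _ exp x _ _ H2 (derivable_pt_lim_exp _)) as H3.
      unfold comp, mult_real_fct in H3. exact H3.
    - intros x Hx. apply exp_pos.
    - intros x Hx. specialize (Hvp x Hx). pose proof (exp_pos (p / kap * ln (v x))) as He.
      set (E := exp (p / kap * ln (v x))) in *.
      replace (E * (p / kap * (/ v x * (kap * Bf x * v x + PI * x / kap)))) with
        (p * Bf x * E + E * (p / kap) * (PI * x / kap / v x)) by (field; lra).
      assert (0 <= E * (p / kap) * (PI * x / kap / v x)).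
      { apply Rmult_le_pos; [apply Rmult_le_pos; [lra|unfold Rdiv; apply Rmult_le_pos; [lra|left; apply Rinv_0_lt_compat; lra]]|].
        unfold Rdiv. apply Rmult_le_pos; [|left; apply Rinv_0_lt_compat; lra].
        apply Rmult_le_pos; [apply Rmult_le_pos; lra|left; apply Rinv_0_lt_compat; lra]. }
      lra. }
  destruct (MVT_cor2 C2 (fun s => kap * Bf s * C2 s + Gf s) t0 t Ht) as [c [Hm Hc]].
  { intros c Hc. apply HC; exact Hc. }
  rewrite Hv in Hm by lra. rewrite HC0 in Hm.
  assert (0 < kap * Bf c * v c * (t - t0)).
  { specialize (HB c ltac:(lra)). specialize (Hvp c ltac:(lra)).
    apply Rmult_lt_0_compat; [apply Rmult_lt_0_compat; [apply Rmult_lt_0_compat|]|]; lra. }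
  lra.
Qed.

Fixpoint bf (fuel n : nat) : R :=
  match fuel with
  | O => 0
  | S f => match n with
           | O => 0
           | S O => 1
           | _ => INR n / (2 * (INR n - 1)) * sum_f 1 (n - 1) (fun j => bf f j * bf f (n - j))
           end
  end.

Definition bseq (n : nat) : R := bf n n.

Lemma sum_f_ext (s n : nat) (F G : nat -> R) : (s <= n)%nat ->
  (forall j, (s <= j <= n)%nat -> F j = G j) -> sum_f s n F = sum_f s n G.
Proof.
  intros Hs H. unfold sum_f. apply sum_eq. intros i Hi. apply H. lia.
Qed.

Lemma bf_stable : forall f1 f2 n, (n <= f1)%nat -> (n <= f2)%nat -> bf f1 n = bf f2 n.
Proof.
  induction f1 as [|f1 IH]; intros f2 n H1 H2.
  - assert (n = 0%nat) by lia. subst. destruct f2; reflexivity.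
  - destruct f2 as [|f2]; [assert (n = 0%nat) by lia; subst; reflexivity|].
    destruct n as [|[|n]]; [reflexivity|reflexivity|].
    change (bf (S f1) (S (S n))) with (INR (S (S n)) / (2 * (INR (S (S n)) - 1)) * sum_f 1 (S (S n) - 1) (fun j => bf f1 j * bf f1 (S (S n) - j))).
    change (bf (S f2) (S (S n))) with (INR (S (S n)) / (2 * (INR (S (S n)) - 1)) * sum_f 1 (S (S n) - 1) (fun j => bf f2 j * bf f2 (S (S n) - j))).
    f_equal. apply sum_f_ext; [lia|].
    intros j Hj. f_equal; apply IH; lia.
Qed.

Lemma bseq_1 : bseq 1 = 1.
Proof. reflexivity. Qed.

Lemma bseq_rec n : (2 <= n)%nat ->
  bseq n = INR n / (2 * (INR n - 1)) * sum_f 1 (n - 1) (fun j => bseq j * bseq (n - j)).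
Proof.
  intros Hn. unfold bseq. destruct n as [|[|m]]; [lia|lia|].
  change (bf (S (S m)) (S (S m))) with
    (INR (S (S m)) / (2 * (INR (S (S m)) - 1)) * sum_f 1 (S (S m) - 1) (fun j => bf (S m) j * bf (S m) (S (S m) - j))).
  f_equal. apply sum_f_ext; [lia|].
  intros j Hj. f_equal; apply bf_stable; lia.
Qed.

Lemma sum_f_le s n F G : (s <= n)%nat -> (forall j, (s <= j <= n)%nat -> F j <= G j) ->
  sum_f s n F <= sum_f s n G.
Proof. intros Hs H. unfold sum_f. apply sum_Rle. intros i Hi. apply H. lia. Qed.

Lemma sum_f_nonneg s n F : (s <= n)%nat -> (forall j, (s <= j <= n)%nat -> 0 <= F j) -> 0 <= sum_f s n F.
Proof.
  intros Hs H. replace 0 with (sum_f s n (fun _ => 0)).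
  - apply sum_f_le; [exact Hs|exact H].
  - unfold sum_f. rewrite sum_cte. ring.
Qed.

Lemma sum_f_scal s n F x : x * sum_f s n F = sum_f s n (fun j => x * F j).
Proof. unfold sum_f. rewrite scal_sum. apply sum_eq. intros; ring. Qed.

Lemma bseq_nonneg : forall n, 0 <= bseq n.
Proof.
  intros n. induction n as [n IH] using lt_wf_ind.
  destruct n as [|[|m]]; [unfold bseq; simpl; lra|rewrite bseq_1; lra|].
  rewrite bseq_rec by lia.
  assert (H2 : 2 <= INR (S (S m))) by (rewrite !S_INR; pose proof (pos_INR m); lra).
  apply Rmult_le_pos.
  - unfold Rdiv. apply Rmult_le_pos; [lra|left; apply Rinv_0_lt_compat; lra].
  - apply sum_f_nonneg; [lia|]. intros j Hj. apply Rmult_le_pos; apply IH; lia.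
Qed.

Lemma bseq_rec2 n : (2 <= n)%nat ->
  (INR n - 1) * bseq n = INR n / 2 * sum_f 1 (n - 1) (fun j => bseq j * bseq (n - j)).
Proof.
  intros Hn. rewrite (bseq_rec n Hn).
  assert (H2 : 2 <= INR n) by (replace 2 with (INR 2) by (simpl; ring); apply le_INR; exact Hn).
  field. lra.
Qed.

Lemma bseq_2 : bseq 2 = 1.
Proof. rewrite bseq_rec by lia. unfold sum_f. simpl. rewrite bseq_1. field. Qed.

Lemma partC (t0 t kap : R) (Bf Gf : R -> R) (c : nat -> R) (C : nat -> R -> R) :
  t0 < t -> 0 < kap ->
  (forall s, t0 <= s <= t -> 0 <= Bf s) ->
  (forall s, t0 <= s <= t -> 0 <= Gf s) ->
  (forall n, (2 <= n)%nat -> 0 <= c n <= kap * (INR n - 1)) ->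
  (forall s, t0 <= s <= t -> C 1%nat s = 1) ->
  (forall n, (2 <= n)%nat -> C n t0 = 0) ->
  (forall n s, (2 <= n)%nat -> t0 <= s <= t -> derivable_pt_lim (C n) s
       (c n * Bf s * C n s + INR n * Gf s / 2 * sum_f 1 (n - 1) (fun j => C j s * C (n - j)%nat s))) ->
  (forall s, t0 <= s <= t -> derivable_pt_lim (C 2%nat) s (kap * Bf s * C 2%nat s + Gf s)) ->
  (forall s, t0 <= s <= t -> 0 <= C 2%nat s) ->
  (forall p, 0 <= p -> exists w w', (forall x, t0 <= x <= t -> derivable_pt_lim w x (w' x)) /\
      (forall x, t0 <= x <= t -> 0 < w x) /\ (forall x, t0 <= x <= t -> p * Bf x * w x <= w' x)) ->
  forall n s, (1 <= n)%nat -> t0 <= s <= t -> 0 <= C n s <= bseq n * C 2%nat s ^ (n - 1).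
Proof.
  intros Ht Hk HB HG Hc HC1 HC0 HCd HC2d HC2p Hw n.
  induction n as [n IH] using lt_wf_ind.
  intros s Hn Hs.
  destruct n as [|[|[|m]]]; [lia| | |].
  - rewrite HC1 by exact Hs. rewrite bseq_1. simpl. lra.
  - rewrite bseq_2. simpl. split; [apply HC2p; exact Hs|lra].
  - set (n := S (S (S m))).
    assert (Hn2 : (2 <= n)%nat) by (unfold n; lia).
    assert (HnR : 3 <= INR n) by (unfold n; rewrite !S_INR; pose proof (pos_INR m); lra).
    set (SumC := fun s => sum_f 1 (n - 1) (fun j => C j s * C (n - j)%nat s)).
    set (Sb := sum_f 1 (n - 1) (fun j => bseq j * bseq (n - j))).
    assert (HSb : 0 <= Sb).
    { apply sum_f_nonneg; [lia|]. intros j Hj. apply Rmult_le_pos; apply bseq_nonneg. }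
    assert (HSum : forall s, t0 <= s <= t -> 0 <= SumC s <= C 2%nat s ^ (n - 2) * Sb).
    { intros x Hx. split.
      - apply sum_f_nonneg; [lia|]. intros j Hj.
        apply Rmult_le_pos; [apply (proj1 (IH j ltac:(lia) x ltac:(lia) Hx))|apply (proj1 (IH (n - j)%nat ltac:(lia) x ltac:(lia) Hx))].
      - unfold Sb. rewrite sum_f_scal. apply sum_f_le; [lia|]. intros j Hj.
        destruct (IH j ltac:(lia) x ltac:(lia) Hx) as [H1 H2].
        destruct (IH (n - j)%nat ltac:(lia) x ltac:(lia) Hx) as [H3 H4].
        replace (C 2%nat x ^ (n - 2) * (bseq j * bseq (n - j))) with
          ((bseq j * C 2%nat x ^ (j - 1)) * (bseq (n - j) * C 2%nat x ^ (n - j - 1))).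
        + apply Rmult_le_compat; assumption.
        + replace (n - 2)%nat with ((j - 1) + (n - j - 1))%nat by lia. rewrite pow_add. ring. }
    destruct (Hw (c n) (proj1 (Hc n Hn2))) as [w [w' [Hwd [Hwp Hwi]]]].
    assert (Hpos : forall x, t0 <= x <= t -> 0 <= C n x).
    { apply (nonneg_weighted (C n) (fun s => c n * Bf s * C n s + INR n * Gf s / 2 * SumC s) w w'
               (fun x => c n * Bf x) t0 t).
      - intros x Hx. apply HCd; assumption.
      - exact Hwd. - exact Hwp.
      - intros x Hx. destruct (HSum x Hx) as [H1 _]. specialize (HG x Hx).
        assert (0 <= INR n * Gf x / 2 * SumC x).
        { apply Rmult_le_pos; [|exact H1]. apply Rmult_le_pos; [apply Rmult_le_pos; lra|lra]. }
        lra.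
      - exact Hwi.
      - rewrite HC0 by exact Hn2. lra. }
    split; [apply Hpos; exact Hs|].
    set (d := fun s => bseq n * C 2%nat s ^ (n - 1) - C n s).
    set (d' := fun s => bseq n * (INR (n - 1) * C 2%nat s ^ Init.Nat.pred (n - 1) * (kap * Bf s * C 2%nat s + Gf s))
                       - (c n * Bf s * C n s + INR n * Gf s / 2 * SumC s)).
    assert (Hdd : forall x, t0 <= x <= t -> derivable_pt_lim d x (d' x)).
    { intros x Hx. unfold d, d'. apply derivable_pt_lim_minus.
      - apply derivable_pt_lim_scal.
        pose proof (derivable_pt_lim_comp (C 2%nat) (fun y => y ^ (n - 1)) x _ _ (HC2d x Hx) (derivable_pt_lim_pow (C 2%nat x) (n - 1))) as H.
        unfold comp in H. exact H.
      - apply HCd; assumption. }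
    assert (Hineq : forall x, t0 <= x <= t -> c n * Bf x * d x <= d' x).
    { intros x Hx. unfold d, d'.
      replace (Init.Nat.pred (n - 1)) with (n - 2)%nat by lia.
      rewrite minus_INR by lia. change (INR 1) with 1.
      replace (n - 1)%nat with (S (n - 2)) by lia. rewrite <- tech_pow_Rmult.
      set (P := C 2%nat x ^ (n - 2)).
      assert (HP : 0 <= P) by (apply pow_le; apply HC2p; exact Hx).
      pose proof (bseq_rec2 n Hn2) as Hrec. fold Sb in Hrec.
      destruct (HSum x Hx) as [H1 H2]. fold P in H2.
      pose proof (HB x Hx). pose proof (HG x Hx). pose proof (HC2p x Hx).
      pose proof (bseq_nonneg n). destruct (Hc n Hn2) as [Hc1 Hc2].
      assert (E : bseq n * ((INR n - 1) * P * (kap * Bf x * C 2%nat x + Gf x)) =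
                  kap * (INR n - 1) * Bf x * (bseq n * (C 2%nat x * P)) + Gf x * P * (INR n / 2 * Sb)).
      { rewrite <- Hrec. ring. }
      rewrite E.
      set (NN := INR n) in *.
      assert (T1 : NN * Gf x / 2 * SumC x <= Gf x * P * (NN / 2 * Sb)).
      { replace (Gf x * P * (NN / 2 * Sb)) with (NN * Gf x / 2 * (P * Sb)) by (clear; unfold Rdiv; ring).
        apply Rmult_le_compat_l; [|exact H2]. apply Rmult_le_pos; [apply Rmult_le_pos; lra|lra]. }
      assert (T2 : 0 <= Bf x * (bseq n * (C 2%nat x * P))).
      { apply Rmult_le_pos; [lra|]. apply Rmult_le_pos; [lra|]. apply Rmult_le_pos; lra. }
      assert (T3 : c n * (Bf x * (bseq n * (C 2%nat x * P))) <= kap * (NN - 1) * (Bf x * (bseq n * (C 2%nat x * P)))).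
      { apply Rmult_le_compat_r; [exact T2|exact Hc2]. }
      nra. }
    assert (Hd0 : 0 <= d t0).
    { unfold d. rewrite (HC0 n Hn2), (HC0 2%nat ltac:(lia)). replace (n - 1)%nat with (S (n - 2)) by lia.
      rewrite <- tech_pow_Rmult. lra. }
    destruct (Hw (c n) (proj1 (Hc n Hn2))) as [w2 [w2' [Hwd2 [Hwp2 Hwi2]]]].
    pose proof (nonneg_weighted d d' w2 w2' (fun x => c n * Bf x) t0 t Hdd Hwd2 Hwp2 Hineq Hwi2 Hd0 s Hs) as Hfin.
    unfold d in Hfin. lra.
Qed.

Fixpoint sm (f : nat -> R) (n : nat) : R :=
  match n with O => 0 | S m => sm f m + f m end.

Lemma sm_ext f g n : (forall i, (i < n)%nat -> f i = g i) -> sm f n = sm g n.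
Proof. induction n; intros H; simpl; [reflexivity|]. rewrite IHn by (intros; apply H; lia). rewrite H by lia. reflexivity. Qed.

Lemma sm_plus f g n : sm (fun i => f i + g i) n = sm f n + sm g n.
Proof. induction n; simpl; [ring|rewrite IHn; ring]. Qed.

Lemma sm_scal c f n : c * sm f n = sm (fun i => c * f i) n.
Proof. induction n; simpl; [ring|rewrite <- IHn; ring]. Qed.

Lemma sm_le f g n : (forall i, (i < n)%nat -> f i <= g i) -> sm f n <= sm g n.
Proof. induction n; intros H; simpl; [lra|]. pose proof (IHn ltac:(intros; apply H; lia)). pose proof (H n ltac:(lia)). lra. Qed.

Lemma sm_nonneg f n : (forall i, (i < n)%nat -> 0 <= f i) -> 0 <= sm f n.
Proof. induction n; intros H; simpl; [lra|]. pose proof (IHn ltac:(intros; apply H; lia)). pose proof (H n ltac:(lia)). lra. Qed.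

Lemma sm_mono_n f m n : (m <= n)%nat -> (forall i, 0 <= f i) -> sm f m <= sm f n.
Proof. intros Hmn H. induction Hmn; [lra|]. simpl. pose proof (H m0). lra. Qed.

Lemma sm_shift f n : sm f (S n) = f 0%nat + sm (fun i => f (S i)) n.
Proof. induction n; simpl in *; [ring|]. rewrite IHn. ring. Qed.

Lemma sm_rev f n : sm f n = sm (fun i => f (n - 1 - i)%nat) n.
Proof.
  induction n; [reflexivity|].
  rewrite (sm_shift (fun i => f (S n - 1 - i)%nat) n).
  change (sm f (S n)) with (sm f n + f n). rewrite IHn.
  replace (S n - 1 - 0)%nat with n by lia.
  rewrite (sm_ext (fun i => f (S n - 1 - S i)%nat) (fun i => f (n - 1 - i)%nat)); [ring|].
  intros i Hi. f_equal. lia.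
Qed.

Lemma sum_f_R0_sm f N : sum_f_R0 f N = sm f (S N).
Proof. induction N; simpl; [ring|]. simpl in IHN. rewrite IHN. reflexivity. Qed.

Lemma sum_f_sm (n : nat) F : (2 <= n)%nat -> sum_f 1 (n - 1) F = sm (fun i => F (S i)) (n - 1).
Proof.
  intros Hn. unfold sum_f. rewrite sum_f_R0_sm. replace (S (n - 1 - 1)) with (n - 1)%nat by lia.
  apply sm_ext. intros i _. f_equal. lia.
Qed.

Lemma bseq_sym m : (1 <= m)%nat ->
  INR m * bseq (S m) = sm (fun i => INR (S i) * bseq (S i) * bseq (m - i)%nat) m.
Proof.
  intros Hm. pose proof (bseq_rec2 (S m) ltac:(lia)) as H.
  rewrite sum_f_sm in H by lia. replace (S m - 1)%nat with m in H by lia.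
  rewrite S_INR in H. replace (INR m + 1 - 1) with (INR m) in H by ring.
  rewrite H.
  set (X := sm (fun i => INR (S i) * bseq (S i) * bseq (m - i)%nat) m).
  assert (HX : X = sm (fun i => (INR m - INR i) * bseq (m - i)%nat * bseq (S i)) m).
  { unfold X. rewrite sm_rev. apply sm_ext. intros i Hi.
    replace (S (m - 1 - i)) with (m - i)%nat by lia.
    replace (m - (m - 1 - i))%nat with (S i) by lia.
    rewrite minus_INR by lia. ring. }
  assert (H2 : 2 * X = (INR m + 1) * sm (fun j => bseq (S j) * bseq (S m - S j)%nat) m).
  { replace (2 * X) with (X + X) by ring. rewrite HX at 2. unfold X. rewrite <- sm_plus.
    rewrite sm_scal. apply sm_ext. intros i Hi. rewrite S_INR.
    replace (S m - S i)%nat with (m - i)%nat by lia. ring. }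
  lra.
Qed.

Lemma comb_ineq (g : nat -> R) K : (forall i, 0 <= g i) ->
  (forall m, INR m * g m = sm (fun i => INR (S i) * g i * g (m - 1 - i)%nat) m) ->
  sm (fun m => INR m * g m) K <= sm (fun i => INR (S i) * g i) K * sm g K.
Proof.
  intros Hg Hrel.
  set (Q := fun K => sm (fun i => INR (S i) * g i * sm g (K - 1 - i)%nat) K).
  assert (HPQ : forall K, sm (fun m => INR m * g m) K = Q K).
  { induction K0 as [|K0 IH]; [reflexivity|].
    simpl sm at 1. rewrite IH. unfold Q. simpl sm at 2.
    replace (S K0 - 1 - K0)%nat with 0%nat by lia. simpl sm at 3.
    rewrite Hrel.
    rewrite (sm_ext (fun i => INR (S i) * g i * sm g (S K0 - 1 - i)%nat)
                   (fun i => INR (S i) * g i * sm g (K0 - 1 - i)%nat + INR (S i) * g i * g (K0 - 1 - i)%nat)).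
    - rewrite sm_plus. replace (K0 - 0 - K0)%nat with 0%nat by lia. simpl sm. ring.
    - intros i Hi. replace (S K0 - 1 - i)%nat with (S (K0 - 1 - i)) by lia. simpl. ring. }
  rewrite HPQ. unfold Q. rewrite Rmult_comm, sm_scal.
  apply sm_le. intros i Hi.
  replace (sm g K * (INR (S i) * g i)) with (INR (S i) * g i * sm g K) by ring.
  apply Rmult_le_compat_l.
  - apply Rmult_le_pos; [apply pos_INR|apply Hg].
  - apply sm_mono_n; [lia|exact Hg].
Qed.

Definition Sp (K : nat) (y : R) : R := sm (fun m => bseq (S m) * y ^ m) K.
Definition Sd (K : nat) (y : R) : R := sm (fun m => bseq (S m) * (INR m * y ^ Init.Nat.pred m)) K.

Lemma Sp_deriv K y : derivable_pt_lim (Sp K) y (Sd K y).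
Proof.
  unfold Sp, Sd. induction K as [|K IH]; simpl.
  - apply derivable_pt_lim_const.
  - apply (derivable_pt_lim_plus (fun y => sm (fun m => bseq (S m) * y ^ m) K) (fun y => bseq (S K) * y ^ K)).
    + exact IH.
    + apply derivable_pt_lim_scal. apply derivable_pt_lim_pow.
Qed.

Lemma Sp_0 K : (1 <= K)%nat -> Sp K 0 = 1.
Proof.
  intros HK. induction K as [|K IH]; [lia|].
  destruct K as [|K].
  - unfold Sp. simpl. rewrite bseq_1. ring.
  - change (Sp (S (S K)) 0) with (Sp (S K) 0 + bseq (S (S K)) * 0 ^ (S K)).
    rewrite IH by lia. rewrite pow_i by lia. ring.
Qed.

Lemma Sp_nonneg K y : 0 <= y -> 0 <= Sp K y.
Proof.
  intros Hy. unfold Sp. apply sm_nonneg. intros i _. apply Rmult_le_pos; [apply bseq_nonneg|apply pow_le; exact Hy].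
Qed.

Lemma key_ineq K y : 0 < y -> Sd K y <= Sp K y * (Sp K y + y * Sd K y).
Proof.
  intros Hy.
  set (g := fun m => bseq (S m) * y ^ (S m)).
  assert (Hg : forall i, 0 <= g i).
  { intros i. unfold g. apply Rmult_le_pos; [apply bseq_nonneg|apply pow_le; lra]. }
  assert (Hrel : forall m, INR m * g m = sm (fun i => INR (S i) * g i * g (m - 1 - i)%nat) m).
  { intros m. destruct m as [|m']; [simpl; ring|].
    unfold g. rewrite <- Rmult_assoc. rewrite (bseq_sym (S m')) by lia.
    rewrite Rmult_comm, sm_scal. apply sm_ext. intros i Hi.
    replace (S (S m' - 1 - i)) with (S m' - i)%nat by lia.
    replace (S (S m')) with (S i + (S m' - i))%nat at 1 by lia. rewrite pow_add. ring. }
  pose proof (comb_ineq g K Hg Hrel) as HC.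
  assert (E1 : sm g K = y * Sp K y).
  { unfold Sp. rewrite sm_scal. apply sm_ext. intros i _. unfold g. simpl. ring. }
  assert (E2 : sm (fun m => INR m * g m) K = y ^ 2 * Sd K y).
  { unfold Sd. rewrite sm_scal. apply sm_ext. intros i _. unfold g.
    destruct i as [|i]; [simpl; ring|]. simpl Init.Nat.pred. simpl pow. ring. }
  assert (E3 : sm (fun i => INR (S i) * g i) K = y ^ 2 * Sd K y + y * Sp K y).
  { rewrite <- E1, <- E2, <- sm_plus. apply sm_ext. intros i _. rewrite S_INR. ring. }
  rewrite E1, E2, E3 in HC.
  assert (Hy2 : 0 < y ^ 2) by (apply pow_lt; lra).
  apply (Rmult_le_reg_l (y ^ 2)); [exact Hy2|].
  replace (y ^ 2 * (Sp K y * (Sp K y + y * Sd K y))) with ((y ^ 2 * Sd K y + y * Sp K y) * (y * Sp K y)) by ring.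
  exact HC.
Qed.

Lemma psi_le K y : (1 <= K)%nat -> 0 <= y -> Sp K y * exp (- (y * Sp K y)) <= 1.
Proof.
  intros HK Hy.
  set (psi := fun y => Sp K y * exp (- (y * Sp K y))).
  set (psi' := fun y => Sd K y * exp (- (y * Sp K y)) + Sp K y * (exp (- (y * Sp K y)) * - (1 * Sp K y + y * Sd K y))).
  assert (Hd : forall c, derivable_pt_lim psi c (psi' c)).
  { intros c. unfold psi, psi'.
    apply (derivable_pt_lim_mult (Sp K) (fun y => exp (- (y * Sp K y)))); [apply Sp_deriv|].
    pose proof (derivable_pt_lim_opp _ _ _ (derivable_pt_lim_mult id (Sp K) c _ _ (derivable_pt_lim_id c) (Sp_deriv K c))) as H1.
    pose proof (derivable_pt_lim_comp _ exp c _ _ H1 (derivable_pt_lim_exp _)) as H2.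
    unfold comp, opp_fct, mult_fct, id in H2. exact H2. }
  destruct (Rle_lt_or_eq_dec 0 y Hy) as [Hy'|Hy'].
  - destruct (MVT_cor2 psi psi' 0 y Hy') as [c [Hm Hc]].
    { intros c _. apply Hd. }
    assert (Hp0 : psi 0 = 1).
    { unfold psi. rewrite Sp_0 by exact HK. replace (- (0 * 1)) with 0 by ring. rewrite exp_0. ring. }
    assert (Hneg : psi' c <= 0).
    { unfold psi'. pose proof (key_ineq K c (proj1 Hc)). pose proof (exp_pos (- (c * Sp K c))).
      set (E := exp (- (c * Sp K c))) in *. nra. }
    fold (psi y). assert (psi' c * (y - 0) <= 0) by (apply Rmult_nonpos_nonneg; lra) || nra.
    lra.
  - subst y. rewrite Sp_0 by exact HK. replace (- (0 * 1)) with 0 by ring. rewrite exp_0. lra.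
Qed.

Lemma xS_le1 K x : (1 <= K)%nat -> 0 <= x -> exp 1 * x < 1 -> x * Sp K x <= 1.
Proof.
  intros HK Hx He.
  destruct (Rle_or_lt (x * Sp K x) 1) as [H|H]; [exact H|exfalso].
  set (f := fun y => y * Sp K y - 1).
  assert (Hcont : continuity f).
  { intros y. apply derivable_continuous_pt. exists (1 * Sp K y + y * Sd K y - 0).
    unfold f. apply derivable_pt_lim_minus; [|apply derivable_pt_lim_const].
    apply (derivable_pt_lim_mult id (Sp K)); [apply derivable_pt_lim_id|apply Sp_deriv]. }
  assert (Hx0 : 0 < x).
  { destruct (Rle_lt_or_eq_dec 0 x Hx) as [H1|H1]; [exact H1|subst x; lra]. }
  destruct (IVT f 0 x Hcont Hx0) as [x1 [Hx1 Hf]].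
  { unfold f. lra. } { unfold f. lra. }
  unfold f in Hf.
  pose proof (psi_le K x1 HK (proj1 Hx1)) as Hp.
  replace (x1 * Sp K x1) with 1 in Hp by lra.
  rewrite exp_Ropp in Hp.
  pose proof (exp_pos 1).
  assert (Sp K x1 <= exp 1).
  { apply (Rmult_le_reg_r (/ exp 1)); [apply Rinv_0_lt_compat; lra|]. rewrite Rinv_r by lra. exact Hp. }
  assert (x1 * Sp K x1 <= x1 * exp 1) by (apply Rmult_le_compat_l; lra).
  assert (x1 * exp 1 <= x * exp 1) by (apply Rmult_le_compat_r; lra).
  lra.
Qed.

Lemma chi_incr u T : 0 <= T -> T < u -> u <= 1 -> T * exp (- T) < u * exp (- u).
Proof.
  intros HT HTu Hu.
  destruct (MVT_cor2 (fun v => v * exp (- v)) (fun v => 1 * exp (- v) + v * (exp (- v) * - 1)) T u HTu) as [c [Hm Hc]].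
  { intros c _.
    apply (derivable_pt_lim_mult id (fun v => exp (- v))); [apply derivable_pt_lim_id|].
    pose proof (derivable_pt_lim_comp _ exp c _ _ (derivable_pt_lim_opp _ _ _ (derivable_pt_lim_id c)) (derivable_pt_lim_exp _)) as H.
    unfold comp, opp_fct, id in H. exact H. }
  pose proof (exp_pos (- c)).
  assert (0 < (1 * exp (- c) + c * (exp (- c) * - 1)) * (u - T)).
  { apply Rmult_lt_0_compat; [|lra]. replace (1 * exp (- c) + c * (exp (- c) * - 1)) with ((1 - c) * exp (- c)) by ring.
    apply Rmult_lt_0_compat; lra. }
  lra.
Qed.

Lemma S_le_W K x w : (1 <= K)%nat -> 0 < x -> exp 1 * x < 1 -> -1 <= w -> w * exp w = - x ->
  Sp K x <= - 1 / x * w.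
Proof.
  intros HK Hx He Hw1 Hw.
  pose proof (xS_le1 K x HK (Rlt_le _ _ Hx) He) as Hu1.
  pose proof (psi_le K x HK (Rlt_le _ _ Hx)) as Hp.
  pose proof (exp_pos w) as Hew.
  assert (Hwn : w < 0).
  { destruct (Rle_or_lt 0 w) as [H|H]; [|exact H]. assert (0 <= w * exp w) by (apply Rmult_le_pos; lra). lra. }
  set (T := - w). set (u := x * Sp K x).
  assert (HT : T * exp (- T) = x) by (unfold T; rewrite Ropp_involutive; lra).
  assert (Hux : u * exp (- u) <= x).
  { unfold u. replace (x * Sp K x * exp (- (x * Sp K x))) with (x * (Sp K x * exp (- (x * Sp K x)))) by ring.
    pose proof (Rmult_le_compat_l x _ _ (Rlt_le _ _ Hx) Hp). lra. }
  assert (Hu : u <= T).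
  { destruct (Rle_or_lt u T) as [H|H]; [exact H|exfalso].
    pose proof (chi_incr u T ltac:(unfold T; lra) H Hu1). lra. }
  unfold u, T in Hu.
  replace (- 1 / x * w) with (- w / x) by (field; lra).
  apply (Rmult_le_reg_l x); [exact Hx|]. replace (x * (- w / x)) with (- w) by (field; lra). exact Hu.
Qed.

Lemma dpl_eq f x l l' : derivable_pt_lim f x l -> l = l' -> derivable_pt_lim f x l'.
Proof. intros H ->; exact H. Qed.

Lemma lim_le (u : nat -> R) l M : Un_cv u l -> (forall n, u n <= M) -> l <= M.
Proof.
  intros Hcv Hu. destruct (Rle_or_lt l M) as [H|H]; [exact H|exfalso].
  destruct (Hcv (l - M) ltac:(lra)) as [N HN]. specialize (HN N (le_n N)).
  unfold R_dist in HN. apply Rabs_def2 in HN. specialize (Hu N). lra.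
Qed.

Lemma lin_coef_bounds k n : (1 <= k)%nat -> (2 <= n)%nat ->
  0 <= lin_coef k n <= (INR k + 1) / INR k * (INR n - 1).
Proof.
  intros Hk Hn. unfold lin_coef.
  assert (HkR : 1 <= INR k) by (replace 1 with (INR 1) by reflexivity; apply le_INR; exact Hk).
  assert (HnR : 2 <= INR n) by (replace 2 with (INR 2) by (simpl; ring); apply le_INR; exact Hn).
  assert (Hkap : 0 < (INR k + 1) / INR k) by (apply Rdiv_lt_0_compat; lra).
  destruct (Nat.leb_spec n k) as [H|H].
  - split; [apply Rmult_le_pos; lra|lra].
  - split; [lra|].
    assert (Hnk : INR k + 1 <= INR n) by (rewrite <- S_INR; apply le_INR; lia).
    apply (Rmult_le_reg_l (INR k)); [lra|].
    replace (INR k * ((INR k + 1) / INR k * (INR n - 1))) with ((INR k + 1) * (INR n - 1)) by (field; lra).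
    nra.
Qed.

Lemma lin_coef_2 k : (1 <= k)%nat -> lin_coef k 2 = (INR k + 1) / INR k.
Proof.
  intros Hk. unfold lin_coef.
  destruct (Nat.leb_spec 2 k) as [H|H].
  - simpl. field. assert (0 < INR k) by (apply lt_0_INR; lia). lra.
  - assert (k = 1%nat) by lia. subst. simpl. field.
Qed.

Theorem proposition3p4
  (beta : R) (k : nat) (t0 t : R)
  (hbeta : 0 < beta) (hk : (1 <= k)%nat) (ht0 : 0 < t0) (ht : t0 < t)
  (K0 K1 K2 K3 g : R -> R)
  (hK0 : is_BesselK0 K0)
  (hK1 : forall r, 0 < r -> derivable_pt_lim K0 r (K1 r))
  (hK2 : forall r, 0 < r -> derivable_pt_lim K1 r (K2 r))
  (hK3 : forall r, 0 < r -> derivable_pt_lim K2 r (K3 r))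
  (hg : is_g K3 g)
  (C : nat -> R -> R)
  (hC1 : forall s, t0 <= s <= t -> C 1%nat s = 1)
  (hCinit : forall n, (2 <= n)%nat -> C n t0 = 0)
  (hCode : forall n s, (2 <= n)%nat -> t0 <= s <= t ->
     derivable_pt_lim (C n) s
       (lin_coef k n * (beta / 2 * g s) * C n s
        + INR n * (beta * PI / 4 * s ^ 2 * g s) / 2
          * sum_f 1 (n - 1) (fun j => C j s * C (n - j)%nat s)))
  (Bint : R -> R)
  (hBint : forall s, t0 <= s <= t -> RInt_is (fun u => beta / 2 * g u) s t (Bint s))
  (tau : R)
  (htau : RInt_is (fun s => (beta * PI / 4 * s ^ 2 * g s)
                            * exp ((INR k + 1) / INR k * Bint s)) t0 t tau) :
  forall z, 0 <= z -> exp 1 * z * tau < 1 ->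
    exists Theta,
      infinite_sum (fun m => C (S m) t * z ^ m) Theta /\
      (z = 0 -> Theta <= 1) /\
      (0 < z -> forall w, is_LambertW0 (- (tau * z)) w ->
         Theta <= -1 / (tau * z) * w).
Proof.
  intros z Hz Hez.
  set (kap := (INR k + 1) / INR k).
  assert (HkR : 1 <= INR k) by (replace 1 with (INR 1) by reflexivity; apply le_INR; exact hk).
  assert (Hkap : 0 < kap) by (unfold kap; apply Rdiv_lt_0_compat; lra).
  set (Bf := fun s => beta / 2 * g s).
  set (Gf := fun s => beta * PI / 4 * s ^ 2 * g s).
  pose proof (g_pos K0 K1 K2 K3 g hK0 hK1 hK2 hK3 hg) as Hg.
  assert (HB : forall s, t0 <= s <= t -> 0 < Bf s).
  { intros s Hs. unfold Bf. specialize (Hg s ltac:(lra)). apply Rmult_lt_0_compat; lra. }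
  assert (HG : forall s, t0 <= s <= t -> Gf s = PI / 2 * s ^ 2 * Bf s).
  { intros s _. unfold Gf, Bf. field. }
  assert (HC2d : forall s, t0 <= s <= t -> derivable_pt_lim (C 2%nat) s (kap * Bf s * C 2%nat s + Gf s)).
  { intros s Hs. eapply dpl_eq; [apply (hCode 2%nat s ltac:(lia) Hs)|].
    rewrite lin_coef_2 by exact hk. unfold sum_f. simpl. rewrite hC1 by exact Hs.
    fold kap. unfold Bf, Gf. field. }
  destruct (partB t0 t kap Bf Gf (C 2%nat) Bint tau ht0 ht Hkap HB HG (hCinit 2%nat ltac:(lia)) HC2d hBint htau)
    as [HC2p [Htau [HC2pos Hw]]].
  assert (Hbound : forall n s, (1 <= n)%nat -> t0 <= s <= t -> 0 <= C n s <= bseq n * C 2%nat s ^ (n - 1)).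
  { apply (partC t0 t kap Bf Gf (lin_coef k) C ht Hkap).
    - intros s Hs. left. apply HB; exact Hs.
    - intros s Hs. rewrite HG by exact Hs. pose proof (HB s Hs). pose proof PI_RGT_0.
      assert (0 <= s ^ 2) by (apply pow_le; lra). apply Rmult_le_pos; [apply Rmult_le_pos; lra|lra].
    - intros n Hn. apply lin_coef_bounds; assumption.
    - exact hC1. - exact hCinit. - exact hCode. - exact HC2d. - exact HC2p. - exact Hw. }
  assert (Htt : t0 <= t <= t) by lra.
  destruct (Rle_lt_or_eq_dec 0 z Hz) as [Hzp|Hz0].
  -
    set (x := tau * z).
    assert (Hx : 0 < x) by (unfold x; rewrite Htau; apply Rmult_lt_0_compat; lra).
    assert (Hex : exp 1 * x < 1) by (unfold x; replace (exp 1 * (tau * z)) with (exp 1 * z * tau) by ring; exact Hez).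
    set (PS := fun N => sum_f_R0 (fun m => C (S m) t * z ^ m) N).
    assert (HPS : forall N, PS N <= Sp (S N) x).
    { intros N. unfold PS, Sp. rewrite sum_f_R0_sm. apply sm_le. intros i _.
      destruct (Hbound (S i) t ltac:(lia) Htt) as [_ H]. replace (S i - 1)%nat with i in H by lia.
      rewrite <- Htau in H. unfold x. rewrite Rpow_mult_distr.
      assert (0 <= z ^ i) by (apply pow_le; lra).
      replace (bseq (S i) * (tau ^ i * z ^ i)) with (bseq (S i) * tau ^ i * z ^ i) by ring.
      apply Rmult_le_compat_r; assumption. }
    assert (Hgrow : Un_growing PS).
    { intros N. unfold PS. change (sum_f_R0 ?f (S N)) with (sum_f_R0 f N + f (S N)). cbv beta. destruct (Hbound (S (S N)) t ltac:(lia) Htt) as [H _].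
      assert (0 <= z ^ S N) by (apply pow_le; lra).
      assert (0 <= C (S (S N)) t * z ^ S N) by (apply Rmult_le_pos; assumption). lra. }
    assert (Hub : has_ub PS).
    { exists (/ x). intros y [N ->]. pose proof (HPS N).
      pose proof (xS_le1 (S N) x ltac:(lia) (Rlt_le _ _ Hx) Hex).
      apply (Rmult_le_reg_l x); [exact Hx|]. rewrite Rinv_r by lra.
      assert (x * PS N <= x * Sp (S N) x) by (apply Rmult_le_compat_l; lra). lra. }
    destruct (growing_cv PS Hgrow Hub) as [l Hl].
    exists l. split; [exact Hl|]. split; [intros; lra|].
    intros _ w [Hw1 Hw2].
    apply (lim_le PS l); [exact Hl|]. intros N.
    pose proof (S_le_W (S N) x w ltac:(lia) Hx Hex Hw1 Hw2). pose proof (HPS N). fold x. lra.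
  -
    subst z. exists 1.
    assert (HP : forall N, sum_f_R0 (fun m => C (S m) t * 0 ^ m) N = 1).
    { induction N as [|N IH]; simpl; [rewrite hC1 by exact Htt; ring|]. rewrite IH. ring. }
    split; [|split; [intros; lra|intros; lra]].
    intros eps Heps. exists 0%nat. intros n _. rewrite HP. unfold R_dist. rewrite Rminus_diag_eq by reflexivity.
    rewrite Rabs_R0. exact Heps.
Qed.
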